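(* Let $0<a,b<1$, $r>as$, $s>br$, and consider the variable-control system $$x_{n+1}=x_n[(1-\alpha_{n+1})e^{r-x_n-ay_n}+\alpha_{n+1}],\quad y_{n+1}=y_n[(1-\beta_{n+1})e^{s-bx_n-y_n}+\beta_{n+1}],\quad n\in\mathbb N_0.$$ The equilibrium $K=(p,q)$ is locally asymptotically stable if either of the following holds: (a) there exist $\lambda\in(0,1)$, a norm on $\mathbb R^2$ (with induced matrix norm $\|\cdot\|$) and constants $0\le\alpha_*<\alpha^*<1$, $0\le\beta_*<\beta^*<1$ such that for all $n$, $\alpha_n\in(\alpha_*,\alpha^* )$, $\beta_n\in(\beta_*,\beta^* )$ and $\|J_{\alpha_n,\beta_n}\|\le\lambda$; (b) there are constants $0\le\alpha_*<\alpha^*<1$, $0\le\beta_*<\beta^*<1$ with $\alpha_*\in\big(\max\{1-\frac{2}{p(1+a)},0\},1\big)$, $\beta_*\in\big(\max\{1-\frac{2}{q(1+b)},0\},1\big)$, and $\alpha_n\in(\alpha_*,\alpha^* )$, $\beta_n\in(\beta_*,\beta^* )$ for all $n\in\mathbb N_0$.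
   Context: $p=\frac{r-as}{1-ab}$, $q=\frac{s-br}{1-ab}$, $K=(p,q)$. For $\alpha,\beta\in[0,1)$ the Jacobian of the controlled Ricker map at $K$ is $J_{\alpha,\beta}=\begin{pmatrix}1-(1-\alpha)p & -a(1-\alpha)p\\ -b(1-\beta)q & 1-(1-\beta)q\end{pmatrix}$. *)

(* Defs.v *)
From HB Require Import structures.
From mathcomp Require Import all_boot all_order all_algebra.
From mathcomp Require Import all_classical all_reals all_analysis.
Set Implicit Arguments. Unset Strict Implicit. Unset Printing Implicit Defensive.
Import Order.TTheory GRing.Theory Num.Theory.
Import numFieldNormedType.Exports.
Local Open Scope classical_set_scope.
Local Open Scope ring_scope.

Section Defs.
Variable R : realType.

Definition peq (a b r s : R) : R := (r - a * s) / (1 - a * b).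
Definition qeq (a b r s : R) : R := (s - b * r) / (1 - a * b).

Definition Jac (a b r s al be : R) : 'M[R]_2 :=
  let p := peq a b r s in let q := qeq a b r s in
  \matrix_(i < 2, j < 2)
    if (i : nat) == 0%N then
      (if (j : nat) == 0%N then 1 - (1 - al) * p else - a * (1 - al) * p)
    else
      (if (j : nat) == 0%N then - b * (1 - be) * q else 1 - (1 - be) * q).

Definition is_norm (N : 'cV[R]_2 -> R) : Prop :=
  [/\ forall v, N v = 0 -> v = 0,
      forall (c : R) v, N (c *: v) = `|c| * N v
    & forall u v, N (u + v) <= N u + N v].

Definition induced_norm (N : 'cV[R]_2 -> R) (A : 'M[R]_2) : R :=
  sup [set N (A *m v) | v in [set v | N v <= 1]].

(* the variable-control system; al n, be n are alpha_n, beta_n;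
   step n -> n+1 uses alpha_{n+1}, beta_{n+1} *)
Fixpoint traj (a b r s : R) (al be : nat -> R) (x0 y0 : R) (n : nat) : R * R :=
  match n with
  | 0%N => (x0, y0)
  | n'.+1 =>
      let z := traj a b r s al be x0 y0 n' in
      let x := z.1 in let y := z.2 in
      (x * ((1 - al n) * expR (r - x - a * y) + al n),
       y * ((1 - be n) * expR (s - b * x - y) + be n))
  end.

Definition LAS (a b r s : R) (al be : nat -> R) : Prop :=
  let p := peq a b r s in let q := qeq a b r s in
  (forall eps : R, 0 < eps -> exists2 del : R, 0 < del &
     forall x0 y0 : R, `|x0 - p| < del -> `|y0 - q| < del ->
       forall n, `|(traj a b r s al be x0 y0 n).1 - p| < eps /\
                 `|(traj a b r s al be x0 y0 n).2 - q| < eps)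
  /\
  (exists2 del : R, 0 < del &
     forall x0 y0 : R, `|x0 - p| < del -> `|y0 - q| < del ->
       ((fun n => (traj a b r s al be x0 y0 n).1) @ \oo --> p) /\
       ((fun n => (traj a b r s al be x0 y0 n).2) @ \oo --> q)).

End Defs.

(* Main.v *)
Require Import Defs.
From HB Require Import structures.
From mathcomp Require Import all_boot all_order all_algebra.
From mathcomp Require Import all_classical all_reals all_analysis.
From mathcomp Require Import ring lra.
Import Order.TTheory GRing.Theory Num.Theory.
Import numFieldNormedType.Exports.
Local Open Scope classical_set_scope.
Local Open Scope ring_scope.
Section S1. Variable R : realType.

Lemma exp_rem (w : R) : `|w| <= 1/2 -> 0 <= expR (-w) - 1 + w <= 2 * w^+2.
Proof.
move=> hw; have h1 := expR_ge1Dx (-w); have h2 := expR_ge1Dx w.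
have hE := expR_gt0 (-w).
have h3 : expR (-w) * expR w = 1 by rewrite expRN mulVf // gt_eqF // expR_gt0.
move: hw; rewrite ler_norml => /andP[hw1 hw2].
have h4 : expR (-w) * (1 + w) <= 1.
  by rewrite -[X in _ <= X]h3; apply: ler_wpM2l => //; apply: ltW.
apply/andP; split; first lra.
nra.
Qed.

Lemma rem_bound (p t u w m : R) : 0 <= p -> 0 <= t <= 1 -> `|u| <= m ->
  `|w| <= 2 * m -> m <= 1/4 ->
  `|t * (p * (expR (-w) - 1 + w) + u * (expR (-w) - 1))| <= (8 * p+4) * m^+2.
Proof.
move=> hp /andP[ht0 ht1] hu hw hm.
have hw' : `|w| <= 1/2 by lra.
have /andP[hh0 hh1] := exp_rem w hw'.
set h := expR (-w) - 1 + w in hh0 hh1 *.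
have eE : expR (-w) - 1 = h - w by rewrite /h; ring.
rewrite eE -(real_normK (num_real w)) in hh1 *.
have hW := normr_ge0 w. have hU := normr_ge0 u.
have hE : `|h - w| <= 2 * `|w|^+2 + `|w|.
  by apply: le_trans (ler_normB _ _) _; rewrite ger0_norm //; lra.
have A : `|p * h + u * (h - w)| <= (8 * p+4) * m^+2.
  apply: le_trans (ler_normD _ _) _.
  rewrite normrM (ger0_norm hp) [`|u * _|]normrM (ger0_norm hh0).
  have B : `|u| * `|h - w| <= m * (2 * `|w|^+2 + `|w|).
    apply: ler_pM => //; exact: normr_ge0.
  have C : p * h <= p * (2 * `|w| ^+ 2) by apply: ler_wpM2l.
  have hm0 : 0 <= m by apply: le_trans hU hu.
  have D : `|w|^+2 <= 4 * m^+2.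
    have -> : 4 * m^+2 = (2 * m)^+2 by rewrite exprMn; congr (_ * _); rewrite expr2; lra.
    rewrite !expr2; nra.
  have D2 : p * (2 * `|w|^+2) <= p * (8 * m^+2) by apply: ler_wpM2l => //; lra.
  have E : 2 * `|w|^+2 + `|w| <= 4 * m.
    have : `|w|^+2 <= `|w| / 2 by rewrite expr2; nra.
    lra.
  have E2 : m * (2 * `|w|^+2 + `|w|) <= m * (4 * m) by apply: ler_wpM2l.
  rewrite expr2 in D2 *. nra.
rewrite normrM (ger0_norm ht0).
have := normr_ge0 (p * h + u * (h - w)).
nra.
Qed.

Definition mx (u v : R) := Num.max `|u| `|v|.

Lemma mx_ge (u v : R) : `|u| <= mx u v /\ `|v| <= mx u v.
Proof. by rewrite /mx le_max lexx le_max lexx orbT. Qed.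

Lemma step1 (p q a r al x y m : R) : p + a * q = r -> 0 <= p -> 0 < a < 1 ->
  0 <= al < 1 -> `|x - p| <= m -> `|y - q| <= m -> m <= 1/4 ->
  `| x * ((1 - al) * expR (r - x - a * y) + al) - p -
     ((1 - (1 - al) * p) * (x - p) + (- a * (1 - al) * p) * (y - q)) |
   <= (8 * p + 4) * m ^+ 2.
Proof.
move=> ep hp /andP[ha0 ha1] /andP[hl0 hl1] hx hy hm.
set u := x - p in hx *; set v := y - q in hy *.
set w := u + a * v.
have ew : r - x - a * y = - w by rewrite /w /u /v -ep; ring.
have -> : x * ((1 - al) * expR (r - x - a * y) + al) - p -
     ((1 - (1 - al) * p) * u + (- a * (1 - al) * p) * v) =
     (1 - al) * (p * (expR (-w) - 1 + w) + u * (expR (-w) - 1)).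
  by rewrite ew /w /u /v; ring.
apply: rem_bound => //; first (apply/andP; split; lra).
apply: le_trans (ler_normD _ _) _.
rewrite normrM (gtr0_norm ha0).
have : a * `|v| <= `|v| by apply: ler_piMl => //; lra.
lra.
Qed.

Lemma eq_pq (a b r s : R) : a * b != 1 ->
  peq a b r s + a * qeq a b r s = r /\ qeq a b r s + b * peq a b r s = s.
Proof.
move=> hab; have h : 1 - a * b != 0 by rewrite subr_eq0 eq_sym.
by rewrite /peq /qeq; split; field.
Qed.

Lemma core (a b r s : R) (al be : nat -> R) (N : R -> R -> R) (c C lam : R) :
  0 < a < 1 -> 0 < b < 1 -> a * s < r -> b * r < s ->
  (forall n, 0 <= al n < 1 /\ 0 <= be n < 1) ->
  0 < c -> (forall u v, c * mx u v <= N u v /\ N u v <= C * mx u v) ->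
  (forall u1 v1 u2 v2, N (u1 + u2) (v1 + v2) <= N u1 v1 + N u2 v2) ->
  0 <= lam < 1 ->
  (forall n u v,
     N ((1 - (1 - al n) * peq a b r s) * u + (- a * (1 - al n) * peq a b r s) * v)
       ((- b * (1 - be n) * qeq a b r s) * u + (1 - (1 - be n) * qeq a b r s) * v)
     <= lam * N u v) ->
  LAS a b r s al be.
Proof.
move=> /andP[ha0 ha1] /andP[hb0 hb1] hr hs hab hc hN hT /andP[hl0 hl1] hJ.
have hab1 : a * b < 1 by rewrite -[1]mul1r; apply: ltr_pM => //; lra.
have [ep eqq] := eq_pq a b r s (negbT (lt_eqF hab1)).
rewrite /LAS.
set p := peq a b r s in ep eqq hJ *; set q := qeq a b r s in ep eqq hJ *.
have hp : 0 < p by rewrite /p /peq divr_gt0 // subr_gt0.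
have hq : 0 < q by rewrite /q /qeq divr_gt0 // subr_gt0.
have hC : 0 < C.
  have [h1 h2] := hN 1 0; move: h1 h2; rewrite /mx normr1 normr0 max_l ?ler01 //.
  lra.
set K := 8 * (p + q) + 4.
have hK : 0 < K by rewrite /K; lra.
set mu := (1 + lam) / 2.
have hmu0 : 0 <= mu by rewrite /mu; lra.
have hmu1 : mu < 1 by rewrite /mu; lra.
set d0 := Num.min (c / 4) ((1 - lam) * c^+2 / (2 * C * K)).
have hd0 : 0 < d0.
  have hc2 : 0 < c ^+ 2 by rewrite exprn_gt0.
  rewrite /d0 lt_min; apply/andP; split; first lra.
  apply: divr_gt0; first by apply: mulr_gt0 => //; lra.
  by rewrite !mulr_gt0.
have hd1 : d0 <= c / 4 by rewrite /d0 ge_min lexx.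
have hd2 : 2 * C * K * d0 <= (1 - lam) * c^+2.
  have : d0 <= (1 - lam) * c^+2 / (2 * C * K) by rewrite /d0 ge_min lexx orbT.
  rewrite ler_pdivlMr ?mulr_gt0 //; last lra.
pose d x0 y0 n := (traj a b r s al be x0 y0 n).1 - p.
pose e x0 y0 n := (traj a b r s al be x0 y0 n).2 - q.
have key : forall x0 y0, N (x0 - p) (y0 - q) <= d0 -> forall n,
    N (d x0 y0 n) (e x0 y0 n) <= mu ^+ n * N (x0 - p) (y0 - q).
  move=> x0 y0 h0; elim=> [|n IH]; first by rewrite expr0 mul1r.
  set N0 := N (x0 - p) (y0 - q) in h0 IH *.
  set Nn := N (d x0 y0 n) (e x0 y0 n) in IH.
  have hN0 : 0 <= N0.
    have [h1 h2] := hN (x0 - p) (y0 - q).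
    have : 0 <= mx (x0 - p) (y0 - q) by rewrite /mx le_max normr_ge0.
    rewrite -/N0 in h1; nra.
  have hmun : mu ^+ n <= 1 by apply: exprn_ile1 => //; lra.
  have hmun0 : 0 <= mu ^+ n by rewrite exprn_ge0.
  have hNn : Nn <= d0 by nra.
  set m := mx (d x0 y0 n) (e x0 y0 n).
  have [hcm _] := hN (d x0 y0 n) (e x0 y0 n).
  rewrite -/m -/Nn in hcm.
  have hm0 : 0 <= m by rewrite /m /mx le_max normr_ge0.
  have hm4 : m <= 1 / 4.
    have : c * m <= c / 4 by lra.
    rewrite mulrC -ler_pdivlMr // mulrAC divff ?mul1r //; last exact: lt0r_neq0.
  have [hdm hem] := mx_ge (d x0 y0 n) (e x0 y0 n).
  rewrite -/m in hdm hem.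
  set x := (traj a b r s al be x0 y0 n).1 in hdm.
  set y := (traj a b r s al be x0 y0 n).2 in hem.
  have [/andP[hal0 hal1] /andP[hbe0 hbe1]] := hab n.+1.
  have ha : 0 < a < 1 by rewrite ha0 ha1.
  have hb : 0 < b < 1 by rewrite hb0 hb1.
  have R1 := @step1 p q a r (al n.+1) x y m ep (ltW hp) ha
     (introT andP (conj hal0 hal1)) hdm hem hm4.
  have R2 := @step1 q p b s (be n.+1) y x m eqq (ltW hq) hb
     (introT andP (conj hbe0 hbe1)) hem hdm hm4.
  rewrite /d /e /= -/x -/y.
  have -> : s - b * x - y = s - y - b * x by ring.
  set X1 := x * _ - p in R1 *. set Y1 := y * _ - q in R2 *.
  set L1 := (1 - (1 - al n.+1) * p) * (x - p) + - a * (1 - al n.+1) * p * (y - q) in R1.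
  set L2 := (1 - (1 - be n.+1) * q) * (y - q) + - b * (1 - be n.+1) * q * (x - p) in R2.
  have -> : X1 = L1 + (X1 - L1) by rewrite addrC subrK.
  have -> : Y1 = (- b * (1 - be n.+1) * q * (x - p) + (1 - (1 - be n.+1) * q) * (y - q))
               + (Y1 - L2) by rewrite /L2 addrC [_ + (_ * (y - q))]addrC subrK.
  apply: le_trans (hT _ _ _ _) _.
  have HR : N (X1 - L1) (Y1 - L2) <= C * (K * m ^+ 2).
    have [_ h] := hN (X1 - L1) (Y1 - L2); apply: le_trans h _.
    apply: ler_wpM2l; first exact: ltW.
    have hm2 : 0 <= m ^+ 2 by rewrite exprn_ge0.
    rewrite /mx ge_max; apply/andP; split.
      apply: le_trans R1 _; apply: ler_wpM2r => //; rewrite /K; lra.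
    apply: le_trans R2 _; apply: ler_wpM2r => //; rewrite /K; lra.
  have hcm2 : c ^+ 2 * m ^+ 2 <= d0 * Nn.
    have hNn0 : 0 <= Nn by have := mulr_ge0 (ltW hc) hm0; lra.
    have hcm0 : 0 <= c * m by apply: mulr_ge0 => //; exact: ltW.
    rewrite -exprMn expr2; apply: le_trans (_ : _ <= Nn * Nn) _.
      exact: ler_pM.
    exact: ler_wpM2r.
  have H3 : c ^+ 2 * (2 * C * K * m ^+ 2) <= c ^+ 2 * ((1 - lam) * Nn).
    have hNn0 : 0 <= Nn by have := mulr_ge0 (ltW hc) hm0; lra.
    have : 2 * C * K * (c ^+ 2 * m ^+ 2) <= 2 * C * K * (d0 * Nn).
      by apply: ler_wpM2l => //; rewrite !mulr_ge0 //; lra.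
    nra.
  rewrite ler_pM2l ?exprn_gt0 // in H3.
  rewrite exprS.
  apply: le_trans (lerD (hJ n.+1 (x - p) (y - q)) HR) _.
  change (lam * Nn + C * (K * m ^+ 2) <= mu * mu ^+ n * N0).
  have : mu * Nn <= mu * (mu ^+ n * N0) by apply: ler_wpM2l.
  rewrite mulrA.
  rewrite /mu in H3 *. nra.
have key2 : forall x0 y0 n, N (x0 - p) (y0 - q) <= d0 ->
    c * mx (d x0 y0 n) (e x0 y0 n) <= mu ^+ n * N (x0 - p) (y0 - q).
  move=> x0 y0 n h; have [h1 _] := hN (d x0 y0 n) (e x0 y0 n).
  exact: le_trans h1 (key x0 y0 h n).
have hN0le : forall x0 y0 del, `|x0 - p| < del -> `|y0 - q| < del ->
    N (x0 - p) (y0 - q) <= C * del.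
  move=> x0 y0 del hx hy; have [_ h2] := hN (x0 - p) (y0 - q).
  apply: le_trans h2 _; apply: ler_wpM2l; first exact: ltW.
  by rewrite /mx ge_max (ltW hx) (ltW hy).
have hN0ge : forall x0 y0, 0 <= N (x0 - p) (y0 - q).
  move=> x0 y0; have [h1 _] := hN (x0 - p) (y0 - q).
  have : 0 <= mx (x0 - p) (y0 - q) by rewrite /mx le_max normr_ge0.
  have := ltW hc. nra.
have hCn : C != 0 by exact: lt0r_neq0.
split.
  move=> eps heps.
  set M := Num.min d0 (c * eps).
  have hM : 0 < M by rewrite /M lt_min hd0 mulr_gt0.
  have hM1 : M <= d0 by rewrite /M ge_min lexx.
  have hM2 : M <= c * eps by rewrite /M ge_min lexx orbT.
  exists (M / (2 * C)); first by rewrite divr_gt0 // mulr_gt0.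
  move=> x0 y0 hx hy n.
  have h := hN0le _ _ _ hx hy.
  have e1 : C * (M / (2 * C)) = M / 2 by field.
  rewrite e1 in h.
  have h0 : N (x0 - p) (y0 - q) <= d0 by lra.
  have hk := key2 x0 y0 n h0.
  have hmun : mu ^+ n <= 1 by apply: exprn_ile1 => //; lra.
  have hmun0 : 0 <= mu ^+ n by rewrite exprn_ge0.
  have := hN0ge x0 y0.
  have [hdm hem] := mx_ge (d x0 y0 n) (e x0 y0 n).
  have hce : c * mx (d x0 y0 n) (e x0 y0 n) < c * eps by nra.
  rewrite ltr_pM2l // in hce.
  rewrite /d /e in hdm hem hce.
  move=> _; split; lra.
exists (d0 / C); first by rewrite divr_gt0.
move=> x0 y0 hx hy.
have h := hN0le _ _ _ hx hy.
rewrite mulrC divfK // in h.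
set N0 := N (x0 - p) (y0 - q) in h.
have hN0 : 0 <= N0 := hN0ge x0 y0.
have hmu : `|mu| < 1 by rewrite ger0_norm.
have conv : forall eps, 0 < eps -> \forall n \near \oo, mx (d x0 y0 n) (e x0 y0 n) <= eps.
  move=> eps heps.
  have := cvg_expr hmu; move/cvgrPdist_le.
  have ht : 0 < eps * c / (N0 + 1) by rewrite divr_gt0 ?mulr_gt0 //; lra.
  move=> /(_ _ ht); apply: filterS => n hn.
  rewrite sub0r normrN ger0_norm ?exprn_ge0 // in hn.
  have hk := key2 x0 y0 n h.
  set t := eps * c / (N0 + 1) in ht hn.
  have et : t * (N0 + 1) = eps * c by rewrite /t divfK //; apply: lt0r_neq0; lra.
  have : mu ^+ n * N0 <= t * N0 by apply: ler_wpM2r.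
  move=> h2.
  have h3 : t * N0 <= t * (N0 + 1) by apply: ler_wpM2l; lra.
  rewrite -/N0 in hk.
  have : c * mx (d x0 y0 n) (e x0 y0 n) <= c * eps by lra.
  by rewrite ler_pM2l.
split; apply/cvgrPdist_le => eps heps; move: (conv eps heps); apply: filterS => n hn;
  have [hdm hem] := mx_ge (d x0 y0 n) (e x0 y0 n); rewrite distrC.
  exact: le_trans hdm hn.
exact: le_trans hem hn.
Qed.
End S1.
Arguments mx {R}. Arguments mx_ge {R}. Arguments core {R} a b r s al be N c C lam. Arguments eq_pq {R}.
Section S2. Variable R : realType.
Lemma mx_tri (u1 v1 u2 v2 : R) : mx (u1 + u2) (v1 + v2) <= mx u1 v1 + mx u2 v2.
Proof.
have [h1 h2] := mx_ge u1 v1; have [h3 h4] := mx_ge u2 v2.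
rewrite [mx (u1 + u2) _]/mx ge_max; apply/andP; split; apply: le_trans (ler_normD _ _) _; lra.
Qed.

Lemma mx_ge0 (u v : R) : 0 <= mx u v.
Proof. by rewrite /mx le_max normr_ge0. Qed.

Lemma mxC (u v : R) : mx u v = mx v u.
Proof. by rewrite /mx maxC. Qed.

Lemma row_bound (P A t t1 t2 u v : R) : 0 < P -> 0 < A < 1 -> t1 <= t <= t2 -> 0 < t1 ->
  `|(1 - t * P) * u + (- A * t * P) * v|
     <= Num.max (1 - t1 * P * (1 - A)) (t2 * P * (1 + A) - 1) * mx u v.
Proof.
move=> hP /andP[hA0 hA1] /andP[ht1 ht2] ht0.
have [hu hv] := mx_ge u v; have hm := mx_ge0 u v.
apply: le_trans (ler_normD _ _) _; rewrite normrM [`|(- A * t * P) * v|]normrM.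
have e2 : `|- A * t * P| = A * t * P.
  have hAtP : 0 <= A * t * P by rewrite !mulr_ge0 //; lra.
  by rewrite ler0_norm; [ring | lra].
rewrite e2.
have B1 : `|1 - t * P| * `|u| <= `|1 - t * P| * mx u v by apply: ler_wpM2l.
have B2 : A * t * P * `|v| <= A * t * P * mx u v by apply: ler_wpM2l => //; rewrite !mulr_ge0 //; lra.
apply: le_trans (lerD B1 B2) _.
rewrite -mulrDl; apply: ler_wpM2r => //.
case: (boolP (t * P <= 1)) => h; last rewrite -ltNge in h.
  rewrite ger0_norm; last lra.
  rewrite le_max; apply/orP; left.
  have : t1 * (P * (1 - A)) <= t * (P * (1 - A)).
    by apply: ler_wpM2r => //; apply: mulr_ge0; lra.
  lra.
rewrite ltr0_norm; last lra.
rewrite le_max; apply/orP; right.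
have : t * (P * (1 + A)) <= t2 * (P * (1 + A)).
  by apply: ler_wpM2r => //; apply: mulr_ge0; lra.
lra.
Qed.
Lemma lemaxl (x y : R) : x <= Num.max x y. Proof. by rewrite le_max lexx. Qed.
Lemma lemaxr (x y : R) : y <= Num.max x y. Proof. by rewrite le_max lexx orbT. Qed.

Lemma partb (a b r s : R) (al be : nat -> R) (al_lo al_hi be_lo be_hi : R) :
  0 < a < 1 -> 0 < b < 1 -> a * s < r -> b * r < s ->
  [/\ 0 <= al_lo < al_hi, al_hi < 1,
      0 <= be_lo < be_hi, be_hi < 1 &
      [/\ Num.max (1 - 2 / (peq a b r s * (1 + a))) 0 < al_lo < 1,
          Num.max (1 - 2 / (qeq a b r s * (1 + b))) 0 < be_lo < 1 &
          forall n : nat, al_lo < al n < al_hi /\ be_lo < be n < be_hi]] ->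
  LAS a b r s al be.
Proof.
move=> ha hb hr hs [/andP[hal0 hal1] hal2 /andP[hbl0 hbl1] hbl2 [hA hB hn]].
have hab1 : a * b < 1.
  case/andP: ha => ? ?; case/andP: hb => ? ?.
  by rewrite -[1]mul1r; apply: ltr_pM => //; lra.
have hp : 0 < peq a b r s by rewrite /peq divr_gt0 // subr_gt0.
have hq : 0 < qeq a b r s by rewrite /qeq divr_gt0 // subr_gt0.
move: hA hB; rewrite !gt_max => /andP[/andP[hA _] _] /andP[/andP[hB _] _].
set p := peq a b r s in hp hA *; set q := qeq a b r s in hq hB *.
case/andP: (ha) => ha0 ha1; case/andP: (hb) => hb0 hb1.
have hP1 : 0 < p * (1 + a) by apply: mulr_gt0 => //; lra.
have hQ1 : 0 < q * (1 + b) by apply: mulr_gt0 => //; lra.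
have h2p : (1 - al_lo) * (p * (1 + a)) < 2.
  by rewrite -ltr_pdivlMr //; lra.
have h2q : (1 - be_lo) * (q * (1 + b)) < 2.
  by rewrite -ltr_pdivlMr //; lra.
set lam1 := Num.max (1 - (1 - al_hi) * p * (1 - a)) ((1 - al_lo) * p * (1 + a) - 1).
set lam2 := Num.max (1 - (1 - be_hi) * q * (1 - b)) ((1 - be_lo) * q * (1 + b) - 1).
have hl1 : lam1 < 1.
  rewrite /lam1 gt_max; apply/andP; split; last by rewrite -mulrA; lra.
  have : 0 < (1 - al_hi) * p * (1 - a) by apply: mulr_gt0; [apply: mulr_gt0|]; lra.
  lra.
have hl2 : lam2 < 1.
  rewrite /lam2 gt_max; apply/andP; split; last by rewrite -mulrA; lra.
  have : 0 < (1 - be_hi) * q * (1 - b) by apply: mulr_gt0; [apply: mulr_gt0|]; lra.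
  lra.
set lam := Num.max (Num.max lam1 lam2) 0.
have hlam1 : lam1 <= lam := le_trans (lemaxl lam1 lam2) (lemaxl _ 0).
have hlam2 : lam2 <= lam := le_trans (lemaxr lam1 lam2) (lemaxl _ 0).
have hlam : 0 <= lam < 1.
  rewrite (lemaxr _ 0) /=; rewrite /lam gt_max ltr01 andbT.
  by rewrite gt_max hl1 hl2.
apply: (@core R a b r s al be mx 1 1 lam) => //.
- move=> n; have [/andP[h1 h2] /andP[h3 h4]] := hn n.
  split; apply/andP; split; lra.
- by move=> u v; rewrite !mul1r lexx.
- exact: mx_tri.
- move=> n u v; have [/andP[h1 h2] /andP[h3 h4]] := hn n.
  rewrite -/p -/q [mx _ _]/mx ge_max; apply/andP; split.
    apply: le_trans (@row_bound p a (1 - al n) (1 - al_hi) (1 - al_lo) u v hp ha _ _) _.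
    + apply/andP; split; lra.
    + lra.
    by apply: ler_wpM2r => //; exact: mx_ge0.
  rewrite addrC.
  apply: le_trans (@row_bound q b (1 - be n) (1 - be_hi) (1 - be_lo) v u hq hb _ _) _.
  + apply/andP; split; lra.
  + lra.
  by rewrite mxC; apply: ler_wpM2r => //; exact: mx_ge0.
Qed.
End S2.
Arguments mx_ge0 {R}. Arguments partb {R}.
Section S3. Variable R : realType.
Lemma lip_cont (g : R -> R) (L : R) : 0 <= L ->
  (forall x y, `|g x - g y| <= L * `|x - y|) -> continuous g.
Proof.
move=> hL hg x; apply/cvgrPdist_le => eps heps.
have hd : 0 < eps / (L + 1) by rewrite divr_gt0 //; lra.
near=> y.
apply: le_trans (hg x y) _.
have : `|x - y| <= eps / (L + 1).
  near: y. apply: (cvgrPdist_le _ _).1 => //.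
rewrite ler_pdivlMr; last lra.
have := normr_ge0 (x - y); nra.
Unshelve. all: by end_near.
Qed.

Definition vec (u v : R) : 'cV[R]_2 :=
  \col_(i < 2) (if (i : nat) == 0%N then u else v).

Lemma vecD (u1 v1 u2 v2 : R) : vec (u1 + u2) (v1 + v2) = vec u1 v1 + vec u2 v2.
Proof. by apply/matrixP => i j; rewrite !mxE; case: ifP. Qed.

Lemma vecZ (k u v : R) : vec (k * u) (k * v) = k *: vec u v.
Proof. by apply/matrixP => i j; rewrite !mxE; case: ifP. Qed.

Lemma vec0 (u v : R) : vec u v = 0 -> u = 0 /\ v = 0.
Proof.
move=> h; split.
  by have := congr1 (fun M : 'cV[R]_2 => M ord0 ord0) h; rewrite !mxE.
by have := congr1 (fun M : 'cV[R]_2 => M ord_max ord0) h; rewrite !mxE.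
Qed.

Lemma vecE (w : 'cV[R]_2) : w = vec (w ord0 ord0) (w ord_max ord0).
Proof.
apply/matrixP => i j; rewrite !mxE (ord1 j).
case: i => [[|[|//]]] hi /=; congr (w _ _); exact: val_inj.
Qed.

Lemma vec_split (u v : R) : vec u v = u *: vec 1 0 + v *: vec 0 1.
Proof. by rewrite -!vecZ -vecD !mulr1 !mulr0 addr0 add0r. Qed.

Lemma Jvec (a b r s al be u v : R) :
  Jac a b r s al be *m vec u v =
  vec ((1 - (1 - al) * peq a b r s) * u + (- a * (1 - al) * peq a b r s) * v)
      ((- b * (1 - be) * qeq a b r s) * u + (1 - (1 - be) * qeq a b r s) * v).
Proof.
apply/matrixP => i j; rewrite !mxE big_ord_recr big_ord_recr big_ord0 /= !mxE /=.
by case: i => [[|[|//]]] hi /=; rewrite add0r.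
Qed.
Section Norm.
Variable N : 'cV[R]_2 -> R.
Hypothesis hN : is_norm N.

Lemma N0 : N 0 = 0.
Proof. by case: hN => _ hZ _; have := hZ 0 0; rewrite scale0r normr0 mul0r. Qed.

Lemma Nge0 v : 0 <= N v.
Proof.
case: hN => _ hZ hT.
have e : v + (-1) *: v = 0 by rewrite scaleN1r subrr.
have := hT v ((-1) *: v); rewrite e N0 hZ normrN normr1 mul1r.
lra.
Qed.

Lemma Npos v : v != 0 -> 0 < N v.
Proof.
move=> hv; rewrite lt_def Nge0 andbT; apply/eqP => h.
by case: hN => h0 _ _; move/eqP: hv; apply; exact: h0.
Qed.

Lemma NZ k v : N (k *: v) = `|k| * N v.
Proof. by case: hN => _ hZ _; exact: hZ. Qed.

Lemma NT u v : N (u + v) <= N u + N v.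
Proof. by case: hN => _ _ hT; exact: hT. Qed.

Lemma Nup u v : N (vec u v) <= (N (vec 1 0) + N (vec 0 1)) * mx u v.
Proof.
rewrite vec_split; apply: le_trans (NT _ _) _; rewrite !NZ mulrDl.
have [h1 h2] := mx_ge u v.
apply: lerD; rewrite mulrC; apply: ler_wpM2l => //; exact: Nge0.
Qed.

Lemma seg_low (h : R -> 'cV[R]_2) (d : 'cV[R]_2) :
  (forall x y, h x = h y + (x - y) *: d) -> (forall t, h t != 0) ->
  exists2 c, 0 < c & forall t, -1 <= t <= 1 -> c <= N (h t).
Proof.
move=> hh hnz.
have hlip : forall x y, `|N (h x) - N (h y)| <= N d * `|x - y|.
  have H : forall x y, N (h x) <= N (h y) + N d * `|x - y|.
    move=> x y; rewrite (hh x y); apply: le_trans (NT _ _) _; rewrite NZ mulrC.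
    by rewrite lexx.
  move=> x y; rewrite ler_norml; apply/andP; split.
    by have := H y x; rewrite distrC; lra.
  by have := H x y; lra.
have hc : continuous (fun t => N (h t)) := @lip_cont (fun t => N (h t)) (N d) (Nge0 d) hlip.
have hm11 : (-1 : R) <= 1 by lra.
have [c hc1 hc2] := EVT_min hm11
   (continuous_subspaceT hc).
exists (N (h c)); first exact: Npos.
move=> t ht; apply: hc2; by rewrite in_itv /=.
Qed.

Lemma Nlow : exists2 c, 0 < c & forall u v, c * mx u v <= N (vec u v).
Proof.
have [c1 hc1 H1] : exists2 c, 0 < c & forall t, -1 <= t <= 1 -> c <= N (vec 1 t).
  apply: (@seg_low _ (vec 0 1)).
    by move=> x y; rewrite -vecZ -vecD mulr0 addr0 mulr1 addrC subrK.
  by move=> t; apply/eqP => /vec0 [h _]; move: h; apply/eqP; exact: oner_neq0.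
have [c2 hc2 H2] : exists2 c, 0 < c & forall t, -1 <= t <= 1 -> c <= N (vec t 1).
  apply: (@seg_low _ (vec 1 0)).
    by move=> x y; rewrite -vecZ -vecD mulr0 addr0 mulr1 addrC subrK.
  by move=> t; apply/eqP => /vec0 [_ h]; move: h; apply/eqP; exact: oner_neq0.
exists (Num.min c1 c2); first by rewrite lt_min hc1 hc2.
move=> u v.
have hm1 : Num.min c1 c2 <= c1 by rewrite ge_min lexx.
have hm2 : Num.min c1 c2 <= c2 by rewrite ge_min lexx orbT.
have hmin0 : 0 <= Num.min c1 c2 by rewrite le_min !ltW.
case: (boolP (`|v| <= `|u|)) => huv.
  have emx : mx u v = `|u| by rewrite /mx max_l.
  rewrite emx.
  case: (eqVneq u 0) => [u0|u0].
    by rewrite u0 normr0 mulr0; exact: Nge0.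
  have -> : vec u v = u *: vec 1 (v / u).
    by rewrite -vecZ mulr1 mulrC divfK.
  rewrite NZ [X in X <= _]mulrC; apply: ler_wpM2l => //.
  apply: le_trans hm1 (H1 _ _); rewrite -ler_norml normrM normrV ?unitfE //.
  by rewrite ler_pdivrMr ?normr_gt0 // mul1r.
rewrite -ltNge in huv.
have emx : mx u v = `|v| by rewrite /mx max_r // ltW.
rewrite emx.
have v0 : v != 0 by rewrite -normr_gt0; apply: le_lt_trans huv.
have -> : vec u v = v *: vec (u / v) 1.
  by rewrite -vecZ mulr1 mulrC divfK.
rewrite NZ [X in X <= _]mulrC; apply: ler_wpM2l => //.
apply: le_trans hm2 (H2 _ _); rewrite -ler_norml normrM normrV ?unitfE //.
by rewrite ler_pdivrMr ?normr_gt0 // mul1r ltW.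
Qed.

End Norm.
End S3.
Arguments vec {R}. Arguments vecD {R}. Arguments vecZ {R}. Arguments vec0 {R}. Arguments vecE {R}. Arguments vec_split {R}. Arguments Jvec {R}.
Arguments N0 {R N} hN. Arguments Nge0 {R N} hN v. Arguments Npos {R N} hN v. Arguments NZ {R N} hN k v. Arguments NT {R N} hN u v.
Arguments Nup {R N} hN u v. Arguments Nlow {R N} hN.
Section S4. Variable R : realType.
Lemma ind_bound (N : 'cV[R]_2 -> R) (hN : is_norm N) (A : 'M[R]_2) (z : 'cV[R]_2) :
  N (A *m z) <= induced_norm N A * N z.
Proof.
have [c hc hlow] := Nlow hN.
rewrite /induced_norm.
set S := [set N (A *m v) | v in [set v | N v <= 1]].
have hS : has_sup S.
  split; first by exists (N (A *m 0)); exists 0 => //=; rewrite N0 // ler01.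
  exists ((N (A *m vec 1 0) + N (A *m vec 0 1)) / c) => y [w /= hw <-].
  rewrite (vecE w) vec_split mulmxDr -!scalemxAr.
  apply: le_trans (NT hN _ _) _; rewrite !NZ //.
  have [h1 h2] := mx_ge (w ord0 ord0) (w ord_max ord0).
  have hl := hlow (w ord0 ord0) (w ord_max ord0); rewrite -vecE in hl.
  have hmx : mx (w ord0 ord0) (w ord_max ord0) <= 1 / c.
    by rewrite ler_pdivlMr // mulrC; apply: le_trans hl hw.
  have g1 := Nge0 hN (A *m vec 1 0); have g2 := Nge0 hN (A *m vec 0 1).
  set m := mx _ _ in h1 h2 hmx hl.
  have B1 : `|w ord0 ord0| * N (A *m vec 1 0) <= m * N (A *m vec 1 0) by apply: ler_wpM2r.
  have B2 : `|w ord_max ord0| * N (A *m vec 0 1) <= m * N (A *m vec 0 1) by apply: ler_wpM2r.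
  apply: le_trans (lerD B1 B2) _.
  rewrite -mulrDr mulrC; apply: ler_wpM2l; first lra.
  by move: hmx; rewrite mul1r.
case: (eqVneq z 0) => [->|z0]; first by rewrite mulmx0 !N0 // mulr0.
have hz := Npos hN z z0.
have : S (N (A *m ((N z)^-1 *: z))).
  exists ((N z)^-1 *: z) => //=.
  rewrite NZ // ger0_norm; last by rewrite invr_ge0 ltW.
  by rewrite mulVf // lt0r_neq0.
move/(sup_upper_bound hS); rewrite -scalemxAr NZ // ger0_norm; last by rewrite invr_ge0 ltW.
by rewrite mulrC ler_pdivrMr.
Qed.
End S4.
Arguments ind_bound {R N} hN A z.
Theorem mainTheorem7 (R : realType) (a b r s : R) (al be : nat -> R) :
  0 < a < 1 -> 0 < b < 1 -> a * s < r -> b * r < s ->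
  ((exists lam : R, 0 < lam < 1 /\
      (exists N : 'cV[R]_2 -> R, is_norm N /\
      exists al_lo al_hi be_lo be_hi : R,
        [/\ 0 <= al_lo < al_hi, al_hi < 1,
            0 <= be_lo < be_hi, be_hi < 1 &
            forall n : nat, [/\ al_lo < al n < al_hi, be_lo < be n < be_hi &
              induced_norm N (Jac a b r s (al n) (be n)) <= lam]]))
   \/
   (exists al_lo al_hi be_lo be_hi : R,
      [/\ 0 <= al_lo < al_hi, al_hi < 1,
          0 <= be_lo < be_hi, be_hi < 1 &
          [/\ Num.max (1 - 2 / (peq a b r s * (1 + a))) 0 < al_lo < 1,
               Num.max (1 - 2 / (qeq a b r s * (1 + b))) 0 < be_lo < 1 &
               forall n : nat, al_lo < al n < al_hi /\ be_lo < be n < be_hi]])) ->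
  LAS a b r s al be.
Proof.
move=> ha hb hr hs [[lam [hlam [N [hN [al_lo [al_hi [be_lo [be_hi
   [/andP[h1 h2] h3 /andP[h4 h5] h6 hn]]]]]]]]] |
   [al_lo [al_hi [be_lo [be_hi H]]]]]; last exact: partb ha hb hr hs H.
have [c hc hlow] := Nlow hN.
apply: (@core R a b r s al be (fun u v => N (vec u v)) c
          (N (vec 1 0) + N (vec 0 1)) lam) => //.
- move=> n; have [/andP[k1 k2] /andP[k3 k4] _] := hn n.
  split; apply/andP; split; lra.
- by move=> u v; split; [exact: hlow | exact: Nup].
- by move=> u1 v1 u2 v2; rewrite vecD; exact: NT.
- by case/andP: hlam => ? ?; apply/andP; split => //; exact: ltW.
- move=> n u v; rewrite -Jvec; apply: le_trans (ind_bound hN _ _) _.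
  apply: ler_wpM2r; first exact: Nge0.
  by have [_ _ ?] := hn n.
Qed.
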